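(* Let $\sigma \in (\mathbb{R}[\mathbf{x}]_{2d+2})^{*}$ be a positive linear functional, and let $\mathbf{k}, \mathbf{p}$ (together with $\mathbf{l}$, $\mathbf{b}$) be the output of the orthogonalization algorithm described below. For $\mathbf{x}^{\alpha}\in (\mathbf{l})_{d}$, i.e. $\mathbf{x}^{\alpha}$ divisible by a monomial in $\mathbf{l}$ and of degree $|\alpha|\le d$, the polynomial $p_{\alpha}= \mathrm{proj}(\mathbf{x}^{\alpha}, \mathbf{p}_{\preceq \alpha})$ lies in $(\mathbf{k})_{\preceq \alpha} \subset \mathrm{Ann}_{d}(\sigma)$.
   Context: Let $\sigma \in (\mathbb{R}[\mathbf{x}]_{2d+2})^{*}$ be positive, i.e. $\sigma(p^2)\ge 0$ for all polynomials $p$ of degree $\le d+1$. Define the bilinear form $\langle p, q\rangle_{\sigma} := \sigma(pq)$ on $\mathbb{R}[\mathbf{x}]_d$, and $\mathrm{Ann}_{d}(\sigma)=\{p\in \mathbb{R}[\mathbf{x}]_{d} \mid \sigma(pq)=0 \text{ for all } q\in\mathbb{R}[\mathbf{x}]_d\} = \{p \in \mathbb{R}[\mathbf{x}]_{d}\mid \sigma(p^{2})=0\}$. For a list $\mathbf{p}=[p_1,\dots,p_l]$ of polynomials with $\langle p_i,p_i\rangle_\sigma>0$ and $\langle p_i,p_j\rangle_\sigma=0$ for $i\ne j$, set $\mathrm{proj}(f,\mathbf{p}) = f - \sum_{i=1}^{l} \frac{\langle f,p_i\rangle_\sigma}{\langle p_i,p_i\rangle_\sigma} p_i$. The algorithm: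 fix a monomial ordering $\prec$ compatible with degree. Start with empty lists $\mathbf{b},\mathbf{p},\mathbf{k},\mathbf{l}$ and current monomial set $\mathbf{n}=[1]$. While $\mathbf{n}$ is nonempty, for each $\mathbf{x}^\alpha\in\mathbf{n}$ compute $p_\alpha := \mathrm{proj}(\mathbf{x}^\alpha,\mathbf{p})$ and $v_\alpha=\langle p_\alpha,p_\alpha\rangle_\sigma$; if $v_\alpha\neq 0$, add $\mathbf{x}^\alpha$ to $\mathbf{b}$ and $p_\alpha$ to $\mathbf{p}$, otherwise add $k_\alpha:=p_\alpha$ to $\mathbf{k}$ and $\mathbf{x}^\alpha$ to $\mathbf{l}$. Then let $\mathbf{n}$ be the monomials of degree $\le d$ of lowest degree, ordered by $\prec$, not in $\mathbf{b}$ and not divisible by a monomial of $\mathbf{l}$. The output is $\mathbf{k}=[k_\gamma]_{\mathbf{x}^\gamma\in\mathbf{l}}$ (with leading monomials $\mathbf{l}$), orthogonal polynomials $\mathbf{p}=[p_\beta]$, and monomials $\mathbf{b}$. Notation: for $\alpha\in\mathbb{N}^n$, $(\mathbf{k})_{\preceq\alpha}$ is the vector space spanned by the polynomials $\mathbf{x}^\delta k_\gamma$ with $\delta+\gamma\preceq\alpha$; $\mathbf{p}_{\preceq\alpha}$ is the set of $p_\beta\in\mathbf{p}$ with $\beta\preceq\alpha$. *)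

(* Defs.v *)
From HB Require Import structures.
From mathcomp Require Import all_boot all_order all_algebra.
From mathcomp Require Export mpoly.
Set Implicit Arguments. Unset Strict Implicit. Unset Printing Implicit Defensive.
Import Order.TTheory GRing.Theory Num.Theory.
Local Open Scope ring_scope.

Section Orth.
Variables (R : realFieldType) (n : nat).
Local Notation mon := 'X_{1..n}.
Local Notation P := {mpoly R[n]}.

Definition monomial_order (mle : rel mon) : Prop :=
  reflexive mle /\ antisymmetric mle /\ transitive mle /\ total mle /\
  (forall a b c : mon, mle a b -> mle (a + c)%MM (b + c)%MM) /\
  (forall a : mon, mle 0%MM a).

Definition degree_compatible (mle : rel mon) : Prop :=
  forall a b : mon, (mdeg a < mdeg b)%N -> mle a b && (a != b).

Variable sigma : P -> R.

Definition bform (p q : P) : R := sigma (p * q).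

Definition proj (f : P) (ps : seq P) : P :=
  f - \sum_(q <- ps) (bform f q / bform q q) *: q.

Definition in_Ann (d : nat) (f : P) : Prop :=
  (msize f <= d.+1)%N /\ forall q : P, (msize q <= d.+1)%N -> sigma (f * q) = 0.

Variable mle : rel mon.
Variable d : nat.

(* State of the algorithm: (b, p, k) where p is the list of pairs (beta, p_beta)
   and k the list of pairs (gamma, k_gamma); the list l is [seq t.1 | t <- k]. *)
Definition alg_state := (seq mon * seq (mon * P) * seq (mon * P))%type.

Definition alg_step1 (st : alg_state) (a : mon) : alg_state :=
  let: (bs, ps, ks) := st in
  let pa := proj 'X_[a] [seq t.2 | t <- ps] in
  if bform pa pa != 0 then (rcons bs a, rcons ps (a, pa), ks)
  else (bs, ps, rcons ks (a, pa)).

Definition mons_le_d : seq mon := [seq val m | m : 'X_{1..n < d.+1}].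

Definition next_mons (st : alg_state) : seq mon :=
  let: (bs, ps, ks) := st in
  let cand := [seq m <- mons_le_d | (m \notin bs) &&
                  ~~ has (fun g => (g <= m)%MM) [seq t.1 | t <- ks]] in
  sort mle [seq m <- cand | all (fun m' => (mdeg m <= mdeg m')%N) cand].

Fixpoint alg_loop (fuel : nat) (st : alg_state) (ns : seq mon) : alg_state :=
  match fuel with
  | 0 => st
  | fuel'.+1 =>
      if ns is [::] then st
      else let st' := foldl alg_step1 st ns in alg_loop fuel' st' (next_mons st')
  end.

(* Each pass of the loop handles at least one new monomial of degree <= d,
   so #|'X_{1..n < d.+1}|.+1 passes suffice for termination. *)
Definition orth_alg : alg_state :=
  alg_loop (#|{: 'X_{1..n < d.+1}}|).+1 ([::], [::], [::]) [:: 0%MM].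

(* (k)_{⪯ alpha}: the span of x^delta k_gamma with delta + gamma ⪯ alpha *)
Definition in_kspan (ks : seq (mon * P)) (a : mon) (f : P) : Prop :=
  exists s : seq (R * mon * (mon * P)),
    all (fun t => (t.2 \in ks) && mle (t.1.2 + t.2.1)%MM a) s /\
    f = \sum_(t <- s) t.1.1 *: ('X_[t.1.2] * t.2.2).

End Orth.

(* Main.v *)
Require Import Defs.
From HB Require Import structures.
From mathcomp Require Import all_boot all_order all_algebra.
From mathcomp Require Import mpoly.
From mathcomp Require Import ring.
Import Order.TTheory GRing.Theory Num.Theory.
Local Open Scope ring_scope.

Section Proof.
Variables (R : realFieldType) (n d : nat).
Local Notation mon := 'X_{1..n}.
Local Notation P := {mpoly R[n]}.
Variable sigma : P -> R.
Hypothesis sigma_lin : forall (c : R) (p q : P), sigma (c *: p + q) = c * sigma p + sigma q.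
Hypothesis sigma_pos : forall p : P, (msize p <= d.+2)%N -> 0 <= sigma (p * p).
Variable mle : rel mon.
Hypothesis Hord : monomial_order mle.
Hypothesis Hdeg : degree_compatible mle.

Lemma sigma0 : sigma 0 = 0.
Proof.
have h := sigma_lin 1 0 0; rewrite scaler0 addr0 mul1r in h.
by have := subrr (sigma 0); rewrite {1}h addrK.
Qed.

Lemma sigmaD p q : sigma (p + q) = sigma p + sigma q.
Proof. by rewrite -{1}(scale1r p) sigma_lin mul1r. Qed.

Lemma sigmaZ c p : sigma (c *: p) = c * sigma p.
Proof. by rewrite -(addr0 (c *: p)) sigma_lin sigma0 addr0. Qed.

Lemma sigma_sum (I : Type) (r : seq I) (Q : pred I) (F : I -> P) :
  sigma (\sum_(i <- r | Q i) F i) = \sum_(i <- r | Q i) sigma (F i).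
Proof. exact: (big_morph sigma sigmaD sigma0). Qed.

Lemma msize_le (f : P) k : (forall m, f@_m != 0 -> (mdeg m < k)%N) -> (msize f <= k)%N.
Proof.
move=> H; rewrite msizeE; apply/bigmax_leqP_seq => m mf _; apply: H.
by rewrite -mcoeff_msupp.
Qed.

Lemma msize_coef (f : P) k m : (msize f <= k)%N -> f@_m != 0 -> (mdeg m < k)%N.
Proof.
move=> H nz; apply: leq_trans H; apply: msize_mdeg_lt; by rewrite mcoeff_msupp.
Qed.

Lemma msizeXM (m : mon) (p : P) : (msize ('X_[m] * p) <= mdeg m + msize p)%N.
Proof.
apply: msize_le => m' nz.
have /msuppM_le /allpairsP [[m1 m2] /= [h1 h2 ->]] : m' \in msupp ('X_[m] * p).
  by rewrite mcoeff_msupp.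
move: h1; rewrite msuppX mem_seq1 => /eqP ->.
by rewrite mdegD ltn_add2l; apply: msize_mdeg_lt.
Qed.

Lemma cs (q h : P) : (msize q <= d.+2)%N -> (msize h <= d.+2)%N ->
  sigma (q * q) = 0 -> sigma (q * h) = 0.
Proof.
move=> sq sh s0; apply/eqP; apply/negP => /negP nz.
set s := sigma (q * h) in nz.
set t := - (sigma (h * h) + 1) / (2 * s).
have sz : (msize (t *: q + h) <= d.+2)%N.
  apply: leq_trans (msizeD_le _ _) _; rewrite geq_max sh andbT.
  exact: leq_trans (msizeZ_le _ _) sq.
have := sigma_pos _ sz.
have -> : (t *: q + h) * (t *: q + h) = (t * t) *: (q * q) + (t *: (q * h) + (t *: (q * h) + h * h)).
  rewrite mulrDl !mulrDr -!scalerAl -!scalerAr scalerA [h * q]mulrC.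
  by rewrite !addrA.
rewrite !sigmaD !sigmaZ s0 mulr0 add0r -/s.
have -> : t * s + (t * s + sigma (h * h)) = -1.
  rewrite /t; field; exact: nz.
by rewrite ler0N1.
Qed.


Lemma mle_refl : reflexive mle. Proof. by case: Hord. Qed.
Lemma mle_anti : antisymmetric mle. Proof. by case: Hord => _ []. Qed.
Lemma mle_trans {x y z : mon} : mle x y -> mle y z -> mle x z.
Proof. by case: Hord => _ [] _ [] H _; apply: H. Qed.
Lemma mle_total : total mle. Proof. by case: Hord => _ [] _ [] _ []. Qed.
Lemma mle_add a b c : mle a b -> mle (a + c)%MM (b + c)%MM.
Proof. by case: Hord => _ [] _ [] _ [] _ [] H _; apply: H. Qed.

Lemma mle_mdeg x y : mle x y -> (mdeg x <= mdeg y)%N.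
Proof.
move=> hxy; rewrite leqNgt; apply/negP => lt.
have /andP[h1 h2] := Hdeg _ _ lt.
by have e := @mle_anti x y (introT andP (conj hxy h1)); by rewrite e eqxx in h2.
Qed.

Lemma cascade (k : P) g : sigma (k * k) = 0 -> (msize k <= g.+1)%N ->
  forall mu : mon, (mdeg mu + g <= d)%N ->
  forall h, (msize h <= d.+2)%N -> sigma ('X_[mu] * k * h) = 0.
Proof.
move=> sk szk.
suff H : forall j (mu : mon), mdeg mu = j -> (mdeg mu + g <= d)%N ->
  forall h, (msize h <= d.+2)%N -> sigma ('X_[mu] * k * h) = 0.
  by move=> mu; apply: H.
elim=> [|j IH] mu hmu hd h sh.
  have hg : (g <= d)%N by move: hd; rewrite hmu.
  move/eqP: hmu; rewrite mdeg_eq0 => /eqP ->; rewrite mpolyX0 mul1r.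
  apply: cs => //; apply: leq_trans szk _; rewrite ltnS.
  exact: leq_trans hg (leqnSn d).
case: (boolP [exists i, (0 < mu i)%N]) => [/existsP[i hi] | /existsPn H]; last first.
  have : mu = 0%MM by apply/mnmP => i; rewrite mnm0E; move: (H i); rewrite lt0n negbK => /eqP.
  by move=> e; rewrite e mdeg0 in hmu.
set mu' := (mu - U_(i))%MM.
have emu : mu = (mu' + U_(i))%MM.
  rewrite submK //; apply/mnm_lepP => j'; rewrite mnm1E; case: eqP => [<-|] //.
have dmu' : mdeg mu' = j by move: hmu; rewrite emu mdegD mdeg1 addn1 => -[].
have szq : (msize ('X_[mu] * k) <= (mdeg mu + g).+1)%N.
  by apply: leq_trans (msizeXM _ _) _; rewrite -addnS leq_add2l.
apply: cs; first by apply: leq_trans szq _; rewrite ltnS ltnW.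
  by [].
have -> : 'X_[mu] * k * ('X_[mu] * k) = 'X_[mu'] * k * ('X_[U_(i)] * ('X_[mu] * k)).
  by rewrite {1}emu mpolyXD; ring.
apply: IH => //.
  by apply: leq_trans hd; rewrite emu mdegD leq_add2r leq_addr.
apply: leq_trans (msizeXM _ _) _; rewrite mdeg1.
by rewrite add1n ltnS; apply: leq_trans szq _.
Qed.


Lemma kspan_Ann (ks : seq (mon * P)) (a : mon) :
  (forall t, t \in ks -> sigma (t.2 * t.2) = 0 /\ (msize t.2 <= (mdeg t.1).+1)%N) ->
  (mdeg a <= d)%N -> forall f, in_kspan mle ks a f -> in_Ann sigma d f.
Proof.
move=> Hks ha f [s [/allP hs ->]].
have hterm : forall t, t \in s -> (msize ('X_[t.1.2] * t.2.2) <= d.+1)%N /\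
    forall q : P, (msize q <= d.+1)%N -> sigma ('X_[t.1.2] * t.2.2 * q) = 0.
  move=> t /hs /andP[tk tle].
  have [sk szk] := Hks _ tk.
  have hdeg : (mdeg t.1.2 + mdeg t.2.1 <= d)%N.
    by rewrite -mdegD; apply: leq_trans ha; apply: mle_mdeg.
  split.
    apply: leq_trans (msizeXM _ _) _.
    apply: leq_trans (leq_add (leqnn _) szk) _; rewrite addnS ltnS.
    exact: hdeg.
  move=> q sq; apply: (cascade _ _ sk szk _ hdeg).
  exact: leq_trans sq (leqnSn _).
split.
  rewrite big_seq; apply: (big_ind (fun f : P => (msize f <= d.+1)%N)).
  - by rewrite msize0.
  - by move=> x y hx hy; apply: leq_trans (msizeD_le _ _) _; rewrite geq_max hx hy.
  - by move=> t /hterm [h _]; apply: leq_trans (msizeZ_le _ _) h.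
move=> q sq; rewrite mulr_suml sigma_sum big_seq big1 // => t /hterm [_ h].
by rewrite -scalerAl sigmaZ h // mulr0.
Qed.

Lemma kspan0 (ks : seq (mon * P)) (a : mon) : in_kspan mle ks a 0.
Proof. by exists [::]; rewrite big_nil. Qed.

Lemma kspanD (ks : seq (mon * P)) (a : mon) (f g : P) : in_kspan mle ks a f -> in_kspan mle ks a g -> in_kspan mle ks a (f + g).
Proof.
move=> [s1 [h1 ->]] [s2 [h2 ->]]; exists (s1 ++ s2); split; first by rewrite all_cat h1 h2.
by rewrite big_cat.
Qed.

Lemma kspanZ (ks : seq (mon * P)) (a : mon) (c : R) (f : P) : in_kspan mle ks a f -> in_kspan mle ks a (c *: f).
Proof.
move=> [s [h ->]]; exists [seq (c * t.1.1, t.1.2, t.2) | t <- s]; split.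
  by rewrite all_map; apply: sub_all h => t.
by rewrite big_map scaler_sumr; apply: eq_bigr => t _; rewrite scalerA.
Qed.

Lemma kspan_mono (ks : seq (mon * P)) (a b : mon) (f : P) : mle a b -> in_kspan mle ks a f -> in_kspan mle ks b f.
Proof.
move=> hab [s [h ->]]; exists s; split => //.
apply: sub_all h => t /andP[-> /= h']; exact: mle_trans h' hab.
Qed.


Lemma mem_mons (m : mon) : (m \in mons_le_d n d) = (mdeg m <= d)%N.
Proof.
apply/idP/idP.
  by rewrite /mons_le_d => /mapP [x _ ->]; have := bmdeg x; rewrite ltnS.
move=> h; apply/mapP; exists (BMultinom (h : (mdeg m < d.+1)%N)) => //.
by rewrite mem_enum.
Qed.

Lemma count_lt_sub (T : eqType) (p1 p2 : pred T) (s : seq T) x :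
  subpred p1 p2 -> x \in s -> p2 x -> ~~ p1 x -> (count p1 s < count p2 s)%N.
Proof.
move=> sub; elim: s => //= y s IH; rewrite in_cons => /orP[/eqP <-|xs] h2 h1.
  by rewrite h2 (negbTE h1) add0n add1n ltnS sub_count.
rewrite -addnS; apply: leq_add (IH xs h2 h1).
by case: (p1 y) (sub y) => // ->.
Qed.

Definition lowerS (a : mon) (f : P) : Prop :=
  forall m, f@_m != 0 -> mle m a && (m != a).

Lemma lt_trans_le {x y z : mon} : mle x y -> mle y z && (y != z) -> mle x z && (x != z).
Proof.
move=> hxy /andP[hyz nyz]; rewrite (mle_trans hxy hyz) /=.
apply/negP => /eqP e; rewrite -e in hyz nyz.
by rewrite (@mle_anti x y) ?hxy ?hyz // eqxx in nyz.
Qed.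

Section Decomp.
Variables (ps ks : seq (mon * P)).
Hypothesis Hcov : forall mu : mon, (mdeg mu <= d)%N ->
  (mu \in [seq t.1 | t <- ps]) || has (fun g => (g <= mu)%MM) [seq t.1 | t <- ks].
Hypothesis Hent : forall t, t \in ps ++ ks -> lowerS t.1 ('X_[t.1] - t.2).
Hypothesis Hu : uniq ps.

Definition good (f : P) (mu : mon) : Prop :=
  exists (c : mon * P -> R) (K : P), (forall t, ~~ mle t.1 mu -> c t = 0) /\
    in_kspan mle ks mu K /\ f = \sum_(t <- ps) c t *: t.2 + K.

Lemma good0 mu : good 0 mu.
Proof.
exists (fun _ => 0), 0; split => //; split; first exact: kspan0.
by rewrite big1 ?addr0 // => t _; rewrite scale0r.
Qed.

Lemma goodD mu f g : good f mu -> good g mu -> good (f + g) mu.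
Proof.
move=> [c1 [K1 [h1 [k1 ->]]]] [c2 [K2 [h2 [k2 ->]]]].
exists (fun t => c1 t + c2 t), (K1 + K2); split.
  by move=> t ht; rewrite h1 // h2 // addr0.
split; first exact: kspanD.
rewrite addrACA; congr (_ + _); rewrite -big_split /=.
by apply: eq_bigr => t _; rewrite scalerDl.
Qed.

Lemma goodZ mu c f : good f mu -> good (c *: f) mu.
Proof.
move=> [c1 [K1 [h1 [k1 ->]]]].
exists (fun t => c * c1 t), (c *: K1); split.
  by move=> t ht; rewrite h1 // mulr0.
split; first exact: kspanZ.
rewrite scalerDr scaler_sumr; congr (_ + _).
by apply: eq_bigr => t _; rewrite scalerA.
Qed.

Lemma good_mono {mu mu' : mon} {f : P} : mle mu mu' -> good f mu -> good f mu'.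
Proof.
move=> hm [c1 [K1 [h1 [k1 ->]]]].
exists c1, K1; split.
  move=> t ht; apply: h1; apply/negP => h; move/negP: ht; apply.
  exact: mle_trans h hm.
by split => //; apply: kspan_mono k1.
Qed.

Lemma good_lower mu f : (forall nu, mle nu mu && (nu != mu) -> good 'X_[nu] nu) ->
  lowerS mu f -> good f mu.
Proof.
move=> IH hf; rewrite (mpolyE f) big_seq.
apply: (big_ind (fun g => good g mu)); [exact: good0 | exact: goodD | ].
move=> m; rewrite mcoeff_msupp => nz; apply: goodZ.
have /andP[h1 h2] := hf _ nz.
apply: (good_mono h1); apply: IH; by rewrite h1 h2.
Qed.

Definition rk (mu : mon) := count (fun x => mle x mu && (x != mu)) (mons_le_d n d).

Lemma decomp mu : (mdeg mu <= d)%N -> good 'X_[mu] mu.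
Proof.
suff H : forall N mu, (rk mu < N)%N -> (mdeg mu <= d)%N -> good 'X_[mu] mu.
  by move=> hd; apply: (H (rk mu).+1).
elim=> // N IH {}mu hr hd.
have IH' : forall nu, mle nu mu && (nu != mu) -> good 'X_[nu] nu.
  move=> nu hnu; have hnd : (mdeg nu <= d)%N.
    by apply: leq_trans _ hd; apply: mle_mdeg; case/andP: hnu.
  apply: IH => //; have hr' : (rk mu <= N)%N by rewrite -ltnS.
  apply: leq_trans hr'.
  apply: (@count_lt_sub _ _ _ _ nu); first by move=> x /= hx; apply: lt_trans_le hnu; case/andP: hx.
  - by rewrite mem_mons.
  - exact: hnu.
  - by rewrite /= eqxx andbF.
case/orP: (Hcov _ hd) => [/mapP [t tp emu0] | /hasP [g /mapP [t tk ->] hdiv]].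
  subst mu.
  have -> : 'X_[t.1] = t.2 + ('X_[t.1] - t.2) by rewrite addrC subrK.
  apply: goodD; last first.
    by apply: (good_lower _ _ IH'); apply: Hent; rewrite mem_cat tp.
  exists (fun t' => (t' == t)%:R), 0; split.
    by move=> t' ht'; case: eqP => // e; rewrite e mle_refl in ht'.
  split; first exact: kspan0.
  rewrite addr0 (bigD1_seq t) //= eqxx scale1r big1 ?addr0 //.
  by move=> t' /negbTE ->; rewrite scale0r.
set delta := (mu - t.1)%MM.
have emu : mu = (delta + t.1)%MM by rewrite submK.
have -> : 'X_[mu] = 'X_[delta] * t.2 + 'X_[delta] * ('X_[t.1] - t.2).
  by rewrite -mulrDr addrC subrK -mpolyXD -emu.
apply: goodD.
  exists (fun _ => 0), ('X_[delta] * t.2); split => //; split.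
    exists [:: (1, delta, t)]; split.
      by rewrite /= tk -emu mle_refl.
    by rewrite big_seq1 /= scale1r.
  by rewrite big1 ?add0r // => t' _; rewrite scale0r.
apply: (good_lower _ _ IH').
have hl := Hent t; rewrite mem_cat tk orbT in hl; have {}hl := hl isT.
move=> m nz.
have /msuppM_le /allpairsP [[m1 m2] /= [h1 h2 ->]] : m \in msupp ('X_[delta] * ('X_[t.1] - t.2)).
  by rewrite mcoeff_msupp.
move: h1; rewrite msuppX mem_seq1 => /eqP ->.
rewrite mcoeff_msupp in h2; have /andP[l1 l2] := hl _ h2.
rewrite emu [(delta + t.1)%MM]addmC [(delta + m2)%MM]addmC mle_add //=.
apply: contra l2 => /eqP e; apply/eqP; exact: (addIm e).
Qed.


Hypothesis Hnz : forall t, t \in ps -> bform sigma t.2 t.2 != 0.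
Hypothesis Horth : forall t t', t \in ps -> t' \in ps -> t != t' -> bform sigma t.2 t'.2 = 0.
Hypothesis Hdps : forall t, t \in ps -> (msize t.2 <= d.+1)%N.
Hypothesis Hks : forall t, t \in ks -> sigma (t.2 * t.2) = 0 /\ (msize t.2 <= (mdeg t.1).+1)%N.

Lemma final_kspan a : (mdeg a <= d)%N ->
  in_kspan mle ks a (proj sigma 'X_[a] [seq t.2 | t <- ps & mle t.1 a]).
Proof.
move=> ha; have [c [K [hc [hK eX]]]] := decomp _ ha.
have [_ AK] := kspan_Ann _ _ Hks ha _ hK.
have claim : forall t, t \in ps -> bform sigma 'X_[a] t.2 = c t * bform sigma t.2 t.2.
  move=> t tp; rewrite /bform eX mulrDl sigmaD AK ?Hdps // addr0.
  rewrite mulr_suml sigma_sum (bigD1_seq t) //= -scalerAl sigmaZ big_seq_cond big1 ?addr0 //.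
  move=> t' /andP[t'p nt']; rewrite -scalerAl sigmaZ.
  by have := Horth _ _ t'p tp nt'; rewrite /bform => ->; rewrite mulr0.
rewrite /proj big_map big_filter.
have -> : \sum_(t <- ps | mle t.1 a) (bform sigma 'X_[a] t.2 / bform sigma t.2 t.2) *: t.2
    = \sum_(t <- ps) c t *: t.2.
  rewrite big_mkcond /= [RHS]big_seq [LHS]big_seq; apply: eq_bigr => t tp.
  case: ifP => h; first by rewrite claim // mulfK // Hnz.
  by rewrite hc ?h // scale0r.
by rewrite {1}eX addrC addKr.
Qed.

End Decomp.


Lemma sigmaB p q : sigma (p - q) = sigma p - sigma q.
Proof. by rewrite sigmaD -scaleN1r sigmaZ mulN1r. Qed.

Lemma le_of_entry {t1 : mon} {p : P} {m : mon} : lowerS t1 ('X_[t1] - p) -> p@_m != 0 -> mle m t1.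
Proof.
move=> hl nz; case: (eqVneq m t1) => [->|ne]; first exact: mle_refl.
have ne' : (t1 == m) = false by rewrite eq_sym (negbTE ne).
have : ('X_[t1] - p)@_m != 0 by rewrite mcoeffB mcoeffX ne' sub0r oppr_eq0.
by move/hl => /andP[].
Qed.

Definition INV (st : alg_state R n) : Prop :=
  match st with (bs, ps, ks) =>
  [/\ bs = [seq t.1 | t <- ps], uniq ps, (forall t, t \in ps -> bform sigma t.2 t.2 != 0),
      (forall t t', t \in ps -> t' \in ps -> t != t' -> bform sigma t.2 t'.2 = 0) &
      ((forall t, t \in ps ++ ks -> lowerS t.1 ('X_[t.1] - t.2) /\ (mdeg t.1 <= d)%N) /\
      (forall t, t \in ks -> bform sigma t.2 t.2 = 0))] end.

Definition Bs (st : alg_state R n) : seq mon := st.1.1.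
Definition Ls (st : alg_state R n) : seq mon := [seq t.1 | t <- st.2].
Definition procd st := Bs st ++ Ls st.

Lemma step_inv st a : INV st -> (mdeg a <= d)%N ->
  (forall m, m \in procd st -> mle m a && (m != a)) ->
  let st' := alg_step1 sigma st a in
  [/\ INV st', (forall m, (m \in procd st') = (m \in procd st) || (m == a)),
      {subset Bs st <= Bs st'} & {subset Ls st <= Ls st'}].
Proof.
case: st => [[bs ps] ks] [Hb Hu Hnz Hor [Hent Hk]] ha Hlt /=.
set pa := proj sigma 'X_[a] [seq t.2 | t <- ps].
have Hlt' : forall t, t \in ps -> mle t.1 a && (t.1 != a).
  by move=> t tp; apply: Hlt; rewrite /procd /Bs /= mem_cat Hb (map_f (fun t => t.1) tp).
have P1 : forall t, t \in ps -> bform sigma t.2 pa = 0.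
  move=> t tp; rewrite /bform /pa /proj big_map mulrBr sigmaB mulr_sumr sigma_sum.
  rewrite (bigD1_seq t) //= big_seq_cond big1 ?addr0.
    rewrite -scalerAr sigmaZ /bform [t.2 * 'X_[a]]mulrC mulfVK ?subrr //.
    by have := Hnz _ tp.
  move=> t' /andP[t'p nt']; rewrite -scalerAr sigmaZ.
  have nt : t != t' by rewrite eq_sym.
  by have := Hor _ _ tp t'p nt; rewrite /bform => ->; rewrite mulr0.
have P2 : lowerS a ('X_[a] - pa).
  have -> : 'X_[a] - pa = \sum_(t <- ps) (bform sigma 'X_[a] t.2 / bform sigma t.2 t.2) *: t.2.
    by rewrite /pa /proj big_map opprB addrC subrK.
  move=> m; rewrite raddf_sum.
  apply: contraR => hm; rewrite big_seq big1 // => t tp.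
  rewrite /= mcoeffZ.
  apply/eqP; rewrite mulf_eq0; apply/orP; right; apply: contraR hm => nz.
  have [hl _] : lowerS t.1 ('X_[t.1] - t.2) /\ (mdeg t.1 <= d)%N by apply: Hent; rewrite mem_cat tp.
  exact: (lt_trans_le (le_of_entry hl nz) (Hlt' _ tp)).
have anp : (a, pa) \notin ps.
  by apply/negP => /Hlt' /= /andP[_]; rewrite eqxx.
case: ifP => hv; split => //.
- split.
  + by rewrite Hb map_rcons.
  + by rewrite rcons_uniq anp.
  + by move=> t; rewrite mem_rcons in_cons => /orP[/eqP -> //|]; apply: Hnz.
  + move=> t t'; rewrite !mem_rcons !in_cons.
    case/orP=> [/eqP -> | tp]; case/orP=> [/eqP -> | t'p] //; first by rewrite eqxx.
    * by move=> _; rewrite /bform mulrC; apply: P1.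
    * by move=> _; apply: P1.
    * exact: Hor.
  + split => //.
    move=> t; rewrite mem_cat mem_rcons in_cons -orbA => /orP[/eqP -> //|].
    by rewrite -mem_cat; apply: Hent.
- move=> m; rewrite /procd /Bs /Ls /= !mem_cat mem_rcons in_cons.
  by case: (m == a); case: (m \in bs); case: (m \in [seq t.1 | t <- ks]).
- by move=> m; rewrite /Bs /= mem_rcons in_cons orbC => ->.
- split => //; split.
  + move=> t; rewrite mem_cat mem_rcons in_cons orbCA => /orP[/eqP -> //|].
    by rewrite -mem_cat; apply: Hent.
  + by move=> t; rewrite mem_rcons in_cons => /orP[/eqP -> |]; [move/negbT: hv; rewrite negbK => /eqP | apply: Hk].
- by move=> m; rewrite /procd /Bs /Ls /= !mem_cat map_rcons mem_rcons in_cons orbA orbC orbA [_ || (m \in bs)]orbC.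
- by move=> m; rewrite /Ls /= map_rcons mem_rcons in_cons orbC => ->.
Qed.


Lemma fold_inv rest st : INV st -> all (fun a => mdeg a <= d)%N rest -> sorted mle rest -> uniq rest ->
  (forall m a, m \in procd st -> a \in rest -> mle m a && (m != a)) ->
  let st' := foldl (alg_step1 sigma) st rest in
  [/\ INV st', (forall m, (m \in procd st') = (m \in procd st) || (m \in rest)),
      {subset Bs st <= Bs st'} & {subset Ls st <= Ls st'}].
Proof.
elim: rest st => [|a rest IH] st hinv /=; first by move=> *; split => // m; rewrite orbF.
move=> /andP[ha hall] hsort /andP[anr hu] hlt.
have [hinv1 hp1 hb1 hl1] := step_inv _ _ hinv ha (fun m hm => hlt m a hm (mem_head _ _)).
have tr : transitive mle by move=> y x z; apply: mle_trans.
have hlt2 : forall m b, m \in procd (alg_step1 sigma st a) -> b \in rest -> mle m b && (m != b).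
  move=> m b hm hb; move: hm; rewrite hp1 => /orP[hm|/eqP ->].
    by apply: hlt => //; rewrite in_cons hb orbT.
  have /allP := order_path_min tr hsort; move=> /(_ b hb) ->.
  by apply: contraNneq anr => ->.
have [hinv2 hp2 hb2 hl2] := IH _ hinv1 hall (path_sorted hsort) hu hlt2.
split => //.
- by move=> m; rewrite hp2 hp1 in_cons -orbA.
- by move=> x /hb1 /hb2.
- by move=> x /hl1 /hl2.
Qed.

Definition candP (st : alg_state R n) (m : mon) : bool :=
  (m \notin Bs st) && ~~ has (fun g => (g <= m)%MM) (Ls st).
Definition cand st := [seq m <- mons_le_d n d | candP st m].

Lemma next_monsE st : next_mons mle d st =
  sort mle [seq m <- cand st | all (fun m' => mdeg m <= mdeg m')%N (cand st)].
Proof. by case: st => [[bs ps] ks]. Qed.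

Definition LOOPINV st := INV st /\
  (forall m m', m \in procd st -> m' \in cand st -> (mdeg m < mdeg m')%N).

Lemma pass st : LOOPINV st -> next_mons mle d st != [::] ->
  let st' := foldl (alg_step1 sigma) st (next_mons mle d st) in
  LOOPINV st' /\ (size (cand st') < size (cand st))%N.
Proof.
move=> [hinv hdeg] hne /=.
set ns := next_mons mle d st.
have memns : forall x, (x \in ns) = (x \in cand st) && all (fun m' => mdeg x <= mdeg m')%N (cand st).
  by move=> x; rewrite /ns next_monsE mem_sort mem_filter andbC.
have candm : forall x, x \in cand st -> (mdeg x <= d)%N /\ candP st x.
  by move=> x; rewrite mem_filter mem_mons => /andP[-> ->].
have Hall : all (fun a => mdeg a <= d)%N ns.
  by apply/allP => x; rewrite memns => /andP[/candm [] ].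
have Hsort : sorted mle ns by rewrite /ns next_monsE; apply: sort_sorted; exact: mle_total.
have Huniq : uniq ns.
  by rewrite /ns next_monsE sort_uniq filter_uniq // filter_uniq // map_inj_uniq ?enum_uniq //; exact: val_inj.
have Hlt : forall m a, m \in procd st -> a \in ns -> mle m a && (m != a).
  move=> m a hm; rewrite memns => /andP[ha _].
  by have := hdeg _ _ hm ha => /(Hdeg _ _).
have [hinv' hp' hb' hl'] := fold_inv _ _ hinv Hall Hsort Huniq Hlt.
set st' := foldl _ st ns in hinv' hp' hb' hl' *.
have subP : forall m, candP st' m -> candP st m.
  move=> m /andP[h1 h2]; apply/andP; split.
    by apply: contra h1; apply: hb'.
  apply: contra h2 => /hasP [g hg hgm]; apply/hasP; exists g => //; exact: hl'.
have notns : forall m, candP st' m -> m \notin ns.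
  move=> m /andP[h1 h2]; apply/negP => hm.
  have : m \in procd st' by rewrite hp' hm orbT.
  rewrite /procd mem_cat (negbTE h1) /= => hL.
  by move/negP: h2; apply; apply/hasP; exists m => //; exact: lepm_refl.
split.
  split => // m m' hm hm'.
  have [hm'd hPm'] : (mdeg m' <= d)%N /\ candP st' m' by move: hm'; rewrite mem_filter mem_mons => /andP[-> ->].
  have hm'c : m' \in cand st by rewrite mem_filter subP // mem_mons.
  have : m' \notin ns by exact: notns.
  rewrite memns hm'c /= => /allPn [y hy hlty]; rewrite -ltnNge in hlty.
  move: hm; rewrite hp' => /orP[hm|hm]; first exact: hdeg.
  move: hm; rewrite memns => /andP[_ /allP /(_ y hy)] hle.
  exact: leq_ltn_trans hle hlty.
have [x hx] : exists x, x \in ns.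
  by move: hne; rewrite -/ns; case E: ns => [|x s] // _; exists x; rewrite mem_head.
rewrite !size_filter; apply: (@count_lt_sub _ _ _ _ x) => //.
- by move: hx; rewrite memns mem_filter => /andP[/andP[_ ->]].
- by move: hx; rewrite memns mem_filter => /andP[/andP[-> _]].
- by apply/negP => /notns; rewrite hx.
Qed.


Definition FINAL st := INV st /\ cand st = [::].

Lemma exists_min (s : seq mon) : s != [::] -> has (fun x => all (fun y => mdeg x <= mdeg y)%N s) s.
Proof.
elim: s => // x s IH _; case: s IH => [|y s] IH; first by rewrite /= leqnn.
have /hasP [z hz hall] := IH isT.
case: (leqP (mdeg x) (mdeg z)) => h.
  apply/hasP; exists x; first exact: mem_head.
  apply/allP => w; rewrite in_cons => /orP[/eqP -> //|hw].
  exact: leq_trans h ((allP hall) w hw).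
apply/hasP; exists z; first by rewrite in_cons hz orbT.
rewrite /= (ltnW h) /=; exact: hall.
Qed.

Lemma loop f st : LOOPINV st -> (size (cand st) < f)%N ->
  FINAL (alg_loop sigma mle d f st (next_mons mle d st)).
Proof.
elim: f st => // f IH st hinv hsz /=.
case E: (next_mons mle d st) => [|x xs].
  split; first by case: hinv.
  apply/eqP; apply: contraT => hne.
  move: E; rewrite next_monsE => /(congr1 size); rewrite size_sort size_filter => hc.
  by have := exists_min _ hne; rewrite has_count hc.
rewrite -E; have hne : next_mons mle d st != [::] by rewrite E.
have [hl hs] := pass _ hinv hne.
apply: IH hl _; apply: leq_trans hs _; by rewrite -ltnS.
Qed.

Lemma init : next_mons mle d (([::], [::], [::]) : alg_state R n) = [:: 0%MM].
Proof.
rewrite next_monsE.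
have -> : cand ([::], [::], [::]) = mons_le_d n d.
  by rewrite /cand (@eq_filter _ _ predT) ?filter_predT.
have hu : uniq (mons_le_d n d) by rewrite map_inj_uniq ?enum_uniq //; exact: val_inj.
have h0 : (0%MM : mon) \in mons_le_d n d by rewrite mem_mons mdeg0.
rewrite (@eq_in_filter _ _ (pred1 0%MM)) ?filter_pred1_uniq //.
move=> m hm /=; apply/idP/idP.
  by move/allP => /(_ _ h0); rewrite mdeg0 leqn0 mdeg_eq0.
by move/eqP ->; apply/allP => y _; rewrite mdeg0.
Qed.

Lemma final_orth : FINAL (orth_alg sigma mle d).
Proof.
rewrite /orth_alg -init; apply: loop.
  split; first by split => //; split.
  by move=> m m'; rewrite /procd /Bs /Ls.
have -> : cand ([::], [::], [::]) = mons_le_d n d.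
  by rewrite /cand (@eq_filter _ _ predT) ?filter_predT.
by rewrite size_map -cardE.
Qed.


Lemma main_sec (a : mon) :
  let: (bs, ps, ks) := orth_alg sigma mle d in
  (mdeg a <= d)%N ->
  has (fun g => (g <= a)%MM) [seq t.1 | t <- ks] ->
  let pa := proj sigma 'X_[a] [seq t.2 | t <- ps & mle t.1 a] in
  in_kspan mle ks a pa /\ (forall f, in_kspan mle ks a f -> in_Ann sigma d f).
Proof.
have [hinv hc] := final_orth.
move: hinv hc; case: (orth_alg sigma mle d) => [[bs ps] ks] [Hb Hu Hnz Hor [Hent Hk]] hc ha _ /=.
have Hcov : forall mu : mon, (mdeg mu <= d)%N ->
    (mu \in [seq t.1 | t <- ps]) || has (fun g => (g <= mu)%MM) [seq t.1 | t <- ks].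
  move=> mu hmu; have : mu \notin cand (bs, ps, ks) by rewrite hc.
  by rewrite mem_filter mem_mons hmu andbT /candP /Bs /Ls /= negb_and !negbK Hb.
have Hent' : forall t, t \in ps ++ ks -> lowerS t.1 ('X_[t.1] - t.2).
  by move=> t ht; case: (Hent t ht).
have Hsz : forall t, t \in ps ++ ks -> (msize t.2 <= (mdeg t.1).+1)%N.
  move=> t ht; have [hl _] := Hent t ht; apply: msize_le => m nz.
  by rewrite ltnS; apply: mle_mdeg; apply: le_of_entry hl nz.
have Hdps : forall t, t \in ps -> (msize t.2 <= d.+1)%N.
  move=> t tp; have ht : t \in ps ++ ks by rewrite mem_cat tp.
  by apply: leq_trans (Hsz t ht) _; rewrite ltnS; case: (Hent t ht).
have Hks : forall t, t \in ks -> sigma (t.2 * t.2) = 0 /\ (msize t.2 <= (mdeg t.1).+1)%N.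
  move=> t tk; split; first exact: Hk.
  by apply: Hsz; rewrite mem_cat tk orbT.
split; first exact: (final_kspan _ _ Hcov Hent' Hu Hnz Hor Hdps Hks _ ha).
exact: kspan_Ann Hks ha.
Qed.

End Proof.

Theorem proposition4p1 (R : realFieldType) (n d : nat)
  (sigma : {mpoly R[n]} -> R)
  (sigma_lin : forall (c : R) (p q : {mpoly R[n]}),
      sigma (c *: p + q) = c * sigma p + sigma q)
  (sigma_pos : forall p : {mpoly R[n]}, (msize p <= d.+2)%N -> 0 <= sigma (p * p))
  (mle : rel 'X_{1..n})
  (Hord : monomial_order mle) (Hdeg : degree_compatible mle)
  (a : 'X_{1..n}) :
  let: (bs, ps, ks) := orth_alg sigma mle d in
  (mdeg a <= d)%N ->
  has (fun g => (g <= a)%MM) [seq t.1 | t <- ks] ->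
  let pa := proj sigma 'X_[a] [seq t.2 | t <- ps & mle t.1 a] in
  in_kspan mle ks a pa /\ (forall f, in_kspan mle ks a f -> in_Ann sigma d f).
Proof. exact: main_sec. Qed.
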